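(* Let $L=\langle S,A,\to\rangle$ be a labelled transition system and $s,t\in S$. Then $s\equiv_b t$ if and only if $s\equiv_\emptyset t$.
   Context: An LTS is $\langle S,A,\to\rangle$ with states $S$, actions $A$ containing the internal action $\tau$, and $\to\subseteq S\times A\times S$; write $s\xrightarrow{a}t$. In both games below, Duplicator wins a finite play if Spoiler gets stuck, and an infinite play if it contains infinitely many configurations with reward $\checkmark$; all other plays are won by Spoiler. Branching bisimulation game: Spoiler-owned configurations $\langle (s,t),c,r\rangle_S$ and Duplicator-owned $\langle (s,t),c,r\rangle_D$ with $(s,t)\in S\times S$, $c\in (A\times S)\cup\{\dagger\}$, $r\in\{*,\checkmark\}$. From $\langle (s,t),c,r\rangle_S$ Spoiler may: (1) select $s\xrightarrow{a}s'$ and move to $\langle (s,t),(a,s'),*\rangle_D$ if $c=(a,s')$ or $c=\dagger$, and to $\langle (s,t),(a,s'),\checkmark\rangle_D$ otherwise; (2) select $t\xrightarrow{a}t'$ and move to $\langle (t,s),(a,t'),\checkmark\rangle_D$. From $\langle (u,v),(a,u'),r\rangle_D$ Duplicator may: (1) if $a=\tau$, move to $\langle (u',v),\dagger,\checkmark\rangle_S$; (2) for some $v\xrightarrow{a}v'$, move to $\langle (u',v'),\dagger,\checkmark\rangle_S$; (3) for some $v\xrightarrow{\tau}v'$, move to $\langle (u,v'),(a,u'),*\rangle_S$. $s\equiv_b t$ iff Duplicator has a strategy winning all plays from $\langle (s,t),\dagger,*\rangle_S$. $\emptyset$-generic bisimulation game: with formal tags $\frown,\smile$, Spoiler-owned configurations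 $\langle (s,t),c,m,r\rangle_S$ and Duplicator-owned $\langle (s,t),c,m,r\rangle_D$ with $(s,t)\in S\times S$, $c\in (A\times S)\cup\{\dagger\}$, $m\in (S\times\{\frown,\smile\})\cup\{\dagger\}$, $r\in\{*,\checkmark\}$. Spoiler from $\langle (s,t),c,m,r\rangle_S$ may: (S1) move to $\langle (s,t),c,m,*\rangle_D$ if $c\neq\dagger$; (S2a) for some $s\xrightarrow{a}s'$, move to $\langle (s,t),(a,s'),(t,\frown),*\rangle_D$ if $c=\dagger$; (S2b) for some $s\xrightarrow{a}s'$, move to $\langle (s,t),(a,s'),(t,\frown),\checkmark\rangle_D$ if $c\neq (a,s')$; (S3) for some $t\xrightarrow{a}t'$, move to $\langle (t,s),(a,t'),(s,\frown),\checkmark\rangle_D$. Duplicator from $\langle (u,v),(a,u'),(\bar v,f),r\rangle_D$ may: (D1) move to $\langle (u',\bar v),\dagger,\dagger,\checkmark\rangle_S$ if $a=\tau$; (D2) if $f=\frown$ and $\bar v\xrightarrow{a}v'$: (a) move to $\langle (u',v'),(a,u'),(v',\smile),*\rangle_S$ or (b) move to $\langle (u',v'),\dagger,\dagger,\checkmark\rangle_S$; (D3) for some $\bar v\xrightarrow{\tau}v'$: (a) move to $\langle (u,v'),(a,u'),(v',f),*\rangle_S$, or (b) only if $f=\smile$, move to $\langle (u',v'),\dagger,\dagger,\checkmark\rangle_S$. $s\equiv_\emptyset t$ iff Duplicator has a strategy winning all plays from $\langle (s,t),\dagger,\dagger,*\rangle_S$. *)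

(* Defs.v *)
From Stdlib Require Import List.
Import ListNotations.

Set Implicit Arguments.

Inductive player := Spoiler | Duplicator.

Record game := Game {
  conf : Type;
  owner : conf -> player;
  move : conf -> conf -> Prop;
  checked : conf -> Prop           (* reward is the tick (checkmark) *)
}.

(** A (history-dependent) Duplicator strategy: given the current configuration
    and the list of previous configurations (most recent first), it proposes
    the next configuration. *)
Definition dstrategy (G : game) := conf G -> list (conf G) -> conf G.

(** Finite play prefixes from [c0] consistent with [sigma], represented as
    (current configuration, reversed list of previous configurations). *)
Inductive consistent (G : game) (sigma : dstrategy G) (c0 : conf G)
  : conf G -> list (conf G) -> Prop :=
| cons_init : consistent sigma c0 c0 []
| cons_spoiler c h c' :
    consistent sigma c0 c h -> owner G c = Spoiler -> move G c c' ->
    consistent sigma c0 c' (c :: h)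
| cons_duplicator c h :
    consistent sigma c0 c h -> owner G c = Duplicator ->
    consistent sigma c0 (sigma c h) (c :: h).

Definition past (G : game) (f : nat -> conf G) (n : nat) : list (conf G) :=
  rev (map f (seq 0 n)).

Definition infinite_play (G : game) (sigma : dstrategy G) (c0 : conf G)
  (f : nat -> conf G) : Prop :=
  f 0 = c0 /\
  forall n,
    (owner G (f n) = Spoiler /\ move G (f n) (f (S n))) \/
    (owner G (f n) = Duplicator /\ f (S n) = sigma (f n) (@past G f n)).

(** [sigma] wins all plays from [c0]:
    - Duplicator is never stuck, i.e. at every reachable Duplicator
      configuration the strategy proposes a legal move (so every finite
      maximal play ends with Spoiler stuck, which Duplicator wins);
    - every infinite play contains infinitely many checked configurations. *)
Definition winning (G : game) (sigma : dstrategy G) (c0 : conf G) : Prop :=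
  (forall c h, consistent sigma c0 c h -> owner G c = Duplicator ->
               move G c (sigma c h)) /\
  (forall f, infinite_play sigma c0 f ->
             forall N, exists n, N <= n /\ checked G (f n)).

Definition duplicator_wins (G : game) (c0 : conf G) : Prop :=
  exists sigma : dstrategy G, winning sigma c0.

Section LTS.
Variables (S A : Type) (tau : A) (trans : S -> A -> S -> Prop).

(** reward: [true] = checkmark, [false] = * ; [None] encodes the dagger. *)

Record bconf := BConf {
  b_own : player; b_l : S; b_r : S; b_c : option (A * S); b_rew : bool }.

Inductive bmove : bconf -> bconf -> Prop :=
| bS1_same s t c r a s' :
    trans s a s' -> (c = Some (a, s') \/ c = None) ->
    bmove (BConf Spoiler s t c r) (BConf Duplicator s t (Some (a, s')) false)
| bS1_other s t c r a s' :
    trans s a s' -> ~ (c = Some (a, s') \/ c = None) ->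
    bmove (BConf Spoiler s t c r) (BConf Duplicator s t (Some (a, s')) true)
| bS2 s t c r a t' :
    trans t a t' ->
    bmove (BConf Spoiler s t c r) (BConf Duplicator t s (Some (a, t')) true)
| bD1 u v a u' r :
    a = tau ->
    bmove (BConf Duplicator u v (Some (a, u')) r) (BConf Spoiler u' v None true)
| bD2 u v a u' r v' :
    trans v a v' ->
    bmove (BConf Duplicator u v (Some (a, u')) r) (BConf Spoiler u' v' None true)
| bD3 u v a u' r v' :
    trans v tau v' ->
    bmove (BConf Duplicator u v (Some (a, u')) r)
          (BConf Spoiler u v' (Some (a, u')) false).

Definition branching_game : game :=
  @Game bconf b_own bmove (fun c => b_rew c = true).

Definition branching_bisimilar (s t : S) : Prop :=
  @duplicator_wins branching_game (BConf Spoiler s t None false).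

Inductive tag := frown | smile.

Record econf := EConf {
  e_own : player; e_l : S; e_r : S; e_c : option (A * S);
  e_m : option (S * tag); e_rew : bool }.

Inductive emove : econf -> econf -> Prop :=
| eS1 s t c m r :
    c <> None ->
    emove (EConf Spoiler s t c m r) (EConf Duplicator s t c m false)
| eS2a s t m r a s' :
    trans s a s' ->
    emove (EConf Spoiler s t None m r)
          (EConf Duplicator s t (Some (a, s')) (Some (t, frown)) false)
| eS2b s t c m r a s' :
    trans s a s' -> c <> Some (a, s') ->
    emove (EConf Spoiler s t c m r)
          (EConf Duplicator s t (Some (a, s')) (Some (t, frown)) true)
| eS3 s t c m r a t' :
    trans t a t' ->
    emove (EConf Spoiler s t c m r)
          (EConf Duplicator t s (Some (a, t')) (Some (s, frown)) true)
| eD1 u v a u' vb f r :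
    a = tau ->
    emove (EConf Duplicator u v (Some (a, u')) (Some (vb, f)) r)
          (EConf Spoiler u' vb None None true)
| eD2a u v a u' vb r v' :
    trans vb a v' ->
    emove (EConf Duplicator u v (Some (a, u')) (Some (vb, frown)) r)
          (EConf Spoiler u' v' (Some (a, u')) (Some (v', smile)) false)
| eD2b u v a u' vb r v' :
    trans vb a v' ->
    emove (EConf Duplicator u v (Some (a, u')) (Some (vb, frown)) r)
          (EConf Spoiler u' v' None None true)
| eD3a u v a u' vb f r v' :
    trans vb tau v' ->
    emove (EConf Duplicator u v (Some (a, u')) (Some (vb, f)) r)
          (EConf Spoiler u v' (Some (a, u')) (Some (v', f)) false)
| eD3b u v a u' vb r v' :
    trans vb tau v' ->
    emove (EConf Duplicator u v (Some (a, u')) (Some (vb, smile)) r)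
          (EConf Spoiler u' v' None None true).

Definition empty_generic_game : game :=
  @Game econf e_own emove (fun c => e_rew c = true).

Definition empty_generic_bisimilar (s t : S) : Prop :=
  @duplicator_wins empty_generic_game (EConf Spoiler s t None None false).

End LTS.

(* Main.v *)
Require Import Defs.
From Stdlib Require Import List Arith Lia Classical ClassicalEpsilon.
Import ListNotations.

Section Generic.
Variable G : game.
Variable sigma : dstrategy G.
Variable c0 : conf G.

Definition step_at (l : list (conf G)) (i : nat) : Prop :=
  (owner G (nth i l c0) = Spoiler /\ move G (nth i l c0) (nth (S i) l c0)) \/
  (owner G (nth i l c0) = Duplicator /\
     nth (S i) l c0 = sigma (nth i l c0) (rev (firstn i l))).

Lemma consistent_rev c h : consistent sigma c0 c h ->
  nth 0 (rev (c :: h)) c0 = c0 /\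
  forall i, i < length h -> step_at (rev (c :: h)) i.
Proof.
  induction 1 as [|c h c' Hc IH Ho Hm|c h Hc IH Ho].
  - split; [reflexivity| simpl; intros; lia].
  - destruct IH as [IH0 IH]. 
    assert (Hl : length (rev (c :: h)) = S (length h)) by (rewrite length_rev; reflexivity).
    split.
    + change (rev (c' :: c :: h)) with (rev (c :: h) ++ [c']).
      rewrite app_nth1 by lia. exact IH0.
    + intros i Hi. simpl in Hi.
      change (rev (c' :: c :: h)) with (rev (c :: h) ++ [c']).
      unfold step_at.
      destruct (Nat.eq_dec i (length h)) as [->|Hne].
      * rewrite app_nth1 by lia. rewrite app_nth2 by lia. rewrite Hl, Nat.sub_diag.
        simpl (nth 0 [c'] c0).
        assert (Hc' : nth (length h) (rev (c :: h)) c0 = c).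
        { simpl. rewrite app_nth2; rewrite length_rev; [rewrite Nat.sub_diag; reflexivity| lia]. }
        rewrite Hc'. left. split; assumption.
      * rewrite !app_nth1 by lia.
        rewrite firstn_app. 
        assert (Hf: i - length (rev (c :: h)) = 0) by lia. rewrite Hf. simpl firstn at 2.
        rewrite app_nil_r. apply IH. lia.
  - destruct IH as [IH0 IH]. 
    assert (Hl : length (rev (c :: h)) = S (length h)) by (rewrite length_rev; reflexivity).
    set (c' := sigma c h).
    split.
    + change (rev (c' :: c :: h)) with (rev (c :: h) ++ [c']).
      rewrite app_nth1 by lia. exact IH0.
    + intros i Hi. simpl in Hi.
      change (rev (c' :: c :: h)) with (rev (c :: h) ++ [c']).
      unfold step_at.
      assert (Hf: forall i, i <= length h -> firstn i (rev (c :: h) ++ [c']) = firstn i (rev (c :: h))).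
      { intros j Hj. rewrite firstn_app.
        assert (Hf: j - length (rev (c :: h)) = 0) by lia. rewrite Hf. simpl firstn at 2.
        apply app_nil_r. }
      rewrite Hf by lia.
      destruct (Nat.eq_dec i (length h)) as [->|Hne].
      * rewrite app_nth1 by lia. rewrite app_nth2 by lia. rewrite Hl, Nat.sub_diag.
        simpl (nth 0 [c'] c0).
        assert (Hc' : nth (length h) (rev (c :: h)) c0 = c).
        { simpl. rewrite app_nth2; rewrite length_rev; [rewrite Nat.sub_diag; reflexivity| lia]. }
        rewrite Hc'. right. split; [assumption|].
        simpl rev. rewrite firstn_app. rewrite length_rev, Nat.sub_diag. simpl firstn at 2.
        rewrite app_nil_r, firstn_all2 by (rewrite length_rev; lia). rewrite rev_involutive. reflexivity.
      * rewrite !app_nth1 by lia. apply IH. lia.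
Qed.

Lemma firstn_map_seq (f : nat -> conf G) l n :
  n <= length l -> (forall i, i < n -> nth i l c0 = f i) ->
  firstn n l = map f (seq 0 n).
Proof.
  intros Hn H. apply nth_ext with (d := c0) (d' := c0).
  - rewrite length_firstn, length_map, length_seq. lia.
  - intros i Hi. rewrite length_firstn in Hi.
    rewrite nth_firstn. destruct (Nat.ltb_spec i n); [|lia].
    rewrite (nth_indep (map f (seq 0 n)) c0 (f 0)) by (rewrite length_map, length_seq; lia).
    rewrite map_nth, seq_nth by lia. apply H. lia.
Qed.

Lemma trap (W : winning sigma c0) (Q : conf G -> list (conf G) -> Prop)
  (Hc : forall c h, Q c h -> consistent sigma c0 c h)
  (Hn : forall c h, Q c h -> ~ checked G (c))
  (Hs : forall c h, Q c h -> exists c', Q c' (c :: h)) c h : Q c h -> False.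
Proof.
  intros HQ.
  pose (T := {p : conf G * list (conf G) | Q (fst p) (snd p)}).
  pose (next := fun p : T =>
    let (c', Hc') := constructive_indefinite_description _ (Hs _ _ (proj2_sig p)) in
    exist (fun p => Q (fst p) (snd p)) (c', fst (proj1_sig p) :: snd (proj1_sig p)) Hc' : T).
  pose (start := exist (fun p => Q (fst p) (snd p)) (c, h) HQ : T).
  pose (P := fun k => proj1_sig (Nat.iter k next start)).
  assert (HPS : forall k, snd (P (S k)) = fst (P k) :: snd (P k)).
  { intros k. unfold P. simpl. destruct (Nat.iter k next start) as [p Hp].
    unfold next; simpl. match goal with |- context [constructive_indefinite_description ?P ?H] => destruct (constructive_indefinite_description P H) end. reflexivity. }
  assert (HQP : forall k, Q (fst (P k)) (snd (P k))).
  { intros k. unfold P. destruct (Nat.iter k next start) as [p Hp]. exact Hp. }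
  pose (full := fun k => rev (fst (P k) :: snd (P k))).
  assert (Hlen : forall k, length (snd (P k)) = length h + k).
  { induction k; [simpl; lia| rewrite HPS; simpl; lia]. }
  assert (Hfull : forall k, full (S k) = full k ++ [fst (P (S k))]).
  { intros k. unfold full. simpl rev at 1. rewrite HPS. reflexivity. }
  assert (Hflen : forall k, length (full k) = S (length h + k)).
  { intros k. unfold full. rewrite length_rev. simpl. rewrite Hlen. reflexivity. }
  assert (Hstab : forall k j i, i < length (full k) -> nth i (full (j + k)) c0 = nth i (full k) c0).
  { intros k j i Hi. induction j; [reflexivity|].
    simpl. rewrite Hfull, app_nth1; [exact IHj|]. rewrite Hflen in *. lia. }
  pose (f := fun n => nth n (full n) c0).
  assert (Hf : forall n k, n <= k -> nth n (full k) c0 = f n).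
  { intros n k Hnk. replace k with ((k - n) + n) by lia. apply Hstab. rewrite Hflen. lia. }
  assert (Hplay : infinite_play sigma c0 f).
  { split.
    - unfold f. destruct (consistent_rev _ _ (Hc _ _ (HQP 0))) as [H0 _]. exact H0.
    - intros n.
      destruct (consistent_rev _ _ (Hc _ _ (HQP (S n)))) as [_ Hst].
      specialize (Hst n). rewrite Hlen in Hst. specialize (Hst ltac:(lia)).
      fold (full (S n)) in Hst. unfold step_at in Hst.
      rewrite (Hf n (S n)), (Hf (S n) (S n)) in Hst by lia.
      unfold past.
      rewrite (firstn_map_seq f) in Hst.
      + exact Hst.
      + rewrite Hflen. lia.
      + intros i Hi. apply Hf. lia. }
  destruct W as [_ W2].
  destruct (W2 f Hplay (length h)) as [n [Hn1 Hn2]].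
  replace n with (length h + (n - length h)) in Hn2 by lia.
  set (j := n - length h) in Hn2.
  unfold f in Hn2.
  rewrite (Hstab j (length h)) in Hn2 by (rewrite Hflen; lia).
  unfold full in Hn2. simpl rev in Hn2.
  rewrite app_nth2 in Hn2 by (rewrite length_rev, Hlen; lia).
  rewrite length_rev, Hlen, Nat.sub_diag in Hn2. simpl in Hn2.
  exact (Hn _ _ (HQP j) Hn2).
Qed.
End Generic.
Section LTS.
Variables (S A : Type) (tau : A) (trans : S -> A -> S -> Prop).

Inductive ans (R : S -> S -> Prop) (u : S) (a : A) (u' : S) : S -> Prop :=
| ans_tau v : a = tau -> R u' v -> ans R u a u' v
| ans_step v v' : trans v a v' -> R u' v' -> ans R u a u' v
| ans_silent v v' : trans v tau v' -> R u v' -> ans R u a u' v' -> ans R u a u' v.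

Fixpoint ansN (R : S -> S -> Prop) (u : S) (a : A) (u' : S) (n : nat) (v : S) : Prop :=
  match n with
  | 0 => (a = tau /\ R u' v) \/ (exists v', trans v a v' /\ R u' v')
  | Datatypes.S k => exists v', trans v tau v' /\ R u v' /\ ansN R u a u' k v'
  end.

Lemma ans_ansN R u a u' v : ans R u a u' v -> exists n, ansN R u a u' n v.
Proof.
  induction 1 as [v H1 H2|v v' H1 H2|v v' H1 H2 H3 [n IH]].
  - exists 0. left. auto.
  - exists 0. right. eauto.
  - exists (Datatypes.S n). simpl. eauto.
Qed.

Lemma ansN_ans R u a u' n v : ansN R u a u' n v -> ans R u a u' v.
Proof.
  revert v; induction n as [|n IH]; simpl; intros v H.
  - destruct H as [[H1 H2]|[v' [H1 H2]]]; [apply ans_tau|eapply ans_step]; eauto.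
  - destruct H as [v' [H1 [H2 H3]]]. eapply ans_silent; eauto.
Qed.

Definition bisim (R : S -> S -> Prop) : Prop :=
  forall u v, R u v -> R v u /\ forall a u', trans u a u' -> ans R u a u' v.

Lemma least_nat (P : nat -> Prop) : (exists n, P n) -> exists n, P n /\ forall m, m < n -> ~ P m.
Proof.
  intros [n Hn]. induction n as [n IH] using lt_wf_ind.
  destruct (classic (exists m, m < n /\ P m)) as [[m [Hm1 Hm2]]|Hno].
  - exact (IH m Hm1 Hm2).
  - exists n. split; [exact Hn|]. intros m Hm HP. apply Hno. eauto.
Qed.

Section BCons.
Variable R : S -> S -> Prop.
Hypothesis HR : bisim R.

Definition InvB (c : bconf S A) : Prop :=
  match c with
  | BConf Spoiler u v _ _ => R u v
  | BConf Duplicator u v (Some (a, u')) _ => R u v /\ ans R u a u' v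
  | BConf Duplicator _ _ None _ => False
  end.

Definition GoodB (c c' : bconf S A) : Prop :=
  bmove tau trans c c' /\ InvB c' /\
  forall u v a u' r, c = BConf Duplicator u v (Some (a, u')) r ->
    exists n, ansN R u a u' n v /\ (forall m, m < n -> ~ ansN R u a u' m v) /\
      (n = 0 -> b_rew c' = true) /\
      (forall k, n = Datatypes.S k -> exists v', c' = BConf Spoiler u v' (Some (a, u')) false /\ ansN R u a u' k v').

Definition gB (c : bconf S A) : bconf S A := epsilon (inhabits c) (GoodB c).

Lemma goodB_ex c : InvB c -> b_own c = Duplicator -> exists c', GoodB c c'.
Proof.
  destruct c as [o u v [[a u']|] r]; simpl; intros HI Ho; subst o; [|contradiction].
  destruct HI as [Huv Hans].
  destruct (least_nat _ (ans_ansN _ _ _ _ _ Hans)) as [n [Hn Hmin]].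
  destruct n as [|k].
  - destruct Hn as [[Ht Hr]|[v' [Ht Hr]]].
    + exists (BConf Spoiler u' v None true). split; [apply bD1; auto|]. split; [exact Hr|].
      intros u0 v0 a0 u0' r0 E; injection E; intros; subst.
      exists 0. repeat split; auto. left; auto. intros k Hk; discriminate.
    + exists (BConf Spoiler u' v' None true). split; [eapply bD2; eauto|]. split; [exact Hr|].
      intros u0 v0 a0 u0' r0 E; injection E; intros; subst.
      exists 0. repeat split; auto. right; eauto. intros k Hk; discriminate.
  - destruct Hn as [v' [Ht [Hr Hk]]].
    exists (BConf Spoiler u v' (Some (a, u')) false). split; [eapply bD3; eauto|]. split; [exact Hr|].
    intros u0 v0 a0 u0' r0 E; injection E; intros; subst.
    exists (Datatypes.S k). split; [simpl; eauto|]. split; [exact Hmin|]. split; [discriminate|].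
    intros k' E'; injection E'; intros; subst. eauto.
Qed.

Lemma goodB_g c : InvB c -> b_own c = Duplicator -> GoodB c (gB c).
Proof. intros H1 H2. unfold gB. apply epsilon_spec. apply goodB_ex; auto. Qed.

Lemma invB_spoiler c c' : InvB c -> b_own c = Spoiler -> bmove tau trans c c' -> InvB c'.
Proof.
  intros HI Ho Hm. destruct Hm; simpl in *; try discriminate.
  - split; [exact HI|]. apply (proj2 (HR _ _ HI)); auto.
  - split; [exact HI|]. apply (proj2 (HR _ _ HI)); auto.
  - pose proof (proj1 (HR _ _ HI)) as Hts. split; [exact Hts|]. apply (proj2 (HR _ _ Hts)); auto.
Qed.

Definition sigmaB : dstrategy (branching_game tau trans) := fun c _ => gB c.

Lemma bcons s t : R s t -> branching_bisimilar tau trans s t.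
Proof.
  intros Hst. exists sigmaB.
  set (c0 := BConf Spoiler s t None false).
  assert (Hinv : forall c h, consistent sigmaB c0 c h -> InvB c).
  { induction 1 as [|c h c' Hc IH Ho Hm|c h Hc IH Ho].
    - exact Hst.
    - eapply invB_spoiler; eauto.
    - apply (goodB_g _ IH Ho). }
  split.
  - intros c h Hc Ho. apply (goodB_g _ (Hinv _ _ Hc) Ho).
  - intros f [Hf0 Hf] N.
    assert (Hfi : forall n, InvB (f n)).
    { induction n as [|n IH]; [rewrite Hf0; exact Hst|].
      destruct (Hf n) as [[Ho Hm]|[Ho E]].
      - eapply invB_spoiler; eauto.
      - rewrite E. apply (goodB_g _ IH Ho). }
    apply NNPP. intros Hno.
    assert (Hun : forall n, N <= n -> b_rew (f n) <> true).
    { intros n Hn Hc. apply Hno. exists n. auto. }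
    assert (Htail : forall n i, N <= i -> forall u v a u' r,
               f i = BConf Duplicator u v (Some (a, u')) r -> ansN R u a u' n v -> False).
    { intros n. induction n as [n IH] using lt_wf_ind.
      intros i Hi u v a u' r E Hn.
      assert (Ho : b_own (f i) = Duplicator) by (rewrite E; reflexivity).
      destruct (Hf i) as [[Ho' _]|[_ E1]]; [simpl in Ho'; congruence|].
      pose proof (goodB_g _ (Hfi i) Ho) as [_ [_ G]].
      destruct (G _ _ _ _ _ E) as [n0 [Hn0 [Hmin [H0 HS]]]].
      assert (n0 <= n) by (destruct (Nat.le_gt_cases n0 n); [auto|exfalso; eapply Hmin; eauto]).
      destruct n0 as [|k].
      - apply (Hun (Datatypes.S i)); [lia|]. rewrite E1. apply H0. reflexivity.
      - destruct (HS k eq_refl) as [v' [E2 Hk]].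
        unfold sigmaB in E1. simpl in E1. rewrite E2 in E1.
        destruct (Hf (Datatypes.S i)) as [[Ho2 Hm2]|[Ho2 _]]; [|rewrite E1 in Ho2; discriminate].
        rewrite E1 in Hm2.
        inversion Hm2; subst.
        + match goal with H : Some _ = Some _ \/ _ |- _ =>
            destruct H as [H|H]; [injection H; intros; subst|discriminate] end.
          match goal with H : _ = f _ |- _ =>
            apply (IH k ltac:(lia) (Datatypes.S (Datatypes.S i)) ltac:(lia) u v' _ _ false (eq_sym H) Hk) end.
        + match goal with H : _ = f _ |- _ =>
            apply (Hun (Datatypes.S (Datatypes.S i))); [lia|]; rewrite <- H; reflexivity end.
        + match goal with H : _ = f _ |- _ =>
            apply (Hun (Datatypes.S (Datatypes.S i))); [lia|]; rewrite <- H; reflexivity end. }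
    assert (HD : exists i, N <= i /\ b_own (f i) = Duplicator).
    { destruct (Hf N) as [[Ho Hm]|[Ho _]]; [|eauto].
      exists (Datatypes.S N). split; [lia|]. simpl in Hm. destruct Hm; try discriminate; reflexivity. }
    destruct HD as [i [Hi Ho]].
    pose proof (Hfi i) as HI.
    destruct (f i) as [o u v [[a u']|] r] eqn:E; simpl in Ho, HI; subst o; [|contradiction].
    destruct HI as [_ Hans]. destruct (ans_ansN _ _ _ _ _ Hans) as [n Hn].
    eapply Htail; eauto.
Qed.
End BCons.
Section ECons.
Variable R : S -> S -> Prop.
Hypothesis HR : bisim R.

Definition InvE (c : econf S A) : Prop :=
  match c with
  | EConf Spoiler u v c m _ =>
      (c = None /\ m = None /\ R u v) \/
      (exists a u', c = Some (a, u') /\ m = Some (v, frown) /\ R u v /\ ans R u a u' v)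
  | EConf Duplicator u v c m _ =>
      exists a u', c = Some (a, u') /\ m = Some (v, frown) /\ R u v /\ ans R u a u' v
  end.

Definition GoodE (c c' : econf S A) : Prop :=
  emove tau trans c c' /\ InvE c' /\
  forall u v a u' m r, c = EConf Duplicator u v (Some (a, u')) m r ->
    exists n, ansN R u a u' n v /\ (forall m, m < n -> ~ ansN R u a u' m v) /\
      (n = 0 -> e_rew c' = true) /\
      (forall k, n = Datatypes.S k -> exists v', c' = EConf Spoiler u v' (Some (a, u')) (Some (v', frown)) false /\ ansN R u a u' k v').

Definition gE (c : econf S A) : econf S A := epsilon (inhabits c) (GoodE c).

Lemma goodE_ex c : InvE c -> e_own c = Duplicator -> exists c', GoodE c c'.
Proof.
  destruct c as [o u v c m r]; simpl; intros HI Ho; subst o.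
  destruct HI as [a [u' [Ec [Em [Huv Hans]]]]]. subst c m.
  destruct (least_nat _ (ans_ansN _ _ _ _ _ Hans)) as [n [Hn Hmin]].
  destruct n as [|k].
  - destruct Hn as [[Ht Hr]|[v' [Ht Hr]]].
    + exists (EConf Spoiler u' v None None true). split; [apply eD1; auto|]. split; [left; auto|].
      intros u0 v0 a0 u0' m0 r0 E; injection E; intros; subst.
      exists 0. repeat split; auto. left; auto. intros k Hk; discriminate.
    + exists (EConf Spoiler u' v' None None true). split; [eapply eD2b; eauto|]. split; [left; auto|].
      intros u0 v0 a0 u0' m0 r0 E; injection E; intros; subst.
      exists 0. repeat split; auto. right; eauto. intros k Hk; discriminate.
  - destruct Hn as [v' [Ht [Hr Hk]]].
    exists (EConf Spoiler u v' (Some (a, u')) (Some (v', frown)) false). split; [eapply eD3a; eauto|].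
    split; [right; exists a, u'; repeat split; auto; eapply ansN_ans; eauto|].
    intros u0 v0 a0 u0' m0 r0 E; injection E; intros; subst.
    exists (Datatypes.S k). split; [simpl; eauto|]. split; [exact Hmin|]. split; [discriminate|].
    intros k' E'; injection E'; intros; subst. eauto.
Qed.

Lemma goodE_g c : InvE c -> e_own c = Duplicator -> GoodE c (gE c).
Proof. intros H1 H2. unfold gE. apply epsilon_spec. apply goodE_ex; auto. Qed.

Lemma invE_spoiler c c' : InvE c -> e_own c = Spoiler -> emove tau trans c c' -> InvE c'.
Proof.
  intros HI Ho Hm. destruct Hm; simpl in *; try discriminate.
  - destruct HI as [[E _]|[a [u' [E1 [E2 [E3 E4]]]]]]; [contradiction|].
    exists a, u'; auto.
  - destruct HI as [[_ [_ HI]]|[? [? [_ [_ [HI _]]]]]];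
    exists a, s'; repeat split; auto; apply (proj2 (HR _ _ HI)); auto.
  - destruct HI as [[_ [_ HI]]|[? [? [_ [_ [HI _]]]]]];
    exists a, s'; repeat split; auto; apply (proj2 (HR _ _ HI)); auto.
  - destruct HI as [[_ [_ HI]]|[? [? [_ [_ [HI _]]]]]];
    pose proof (proj1 (HR _ _ HI)) as Hts;
    exists a, t'; repeat split; auto; apply (proj2 (HR _ _ Hts)); auto.
Qed.

Definition sigmaE : dstrategy (empty_generic_game tau trans) := fun c _ => gE c.

Lemma econs s t : R s t -> empty_generic_bisimilar tau trans s t.
Proof.
  intros Hst. exists sigmaE.
  set (c0 := EConf Spoiler s t None None false).
  assert (H0 : InvE c0) by (left; auto).
  assert (Hinv : forall c h, consistent sigmaE c0 c h -> InvE c).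
  { induction 1 as [|c h c' Hc IH Ho Hm|c h Hc IH Ho].
    - exact H0.
    - eapply invE_spoiler; eauto.
    - apply (goodE_g _ IH Ho). }
  split.
  - intros c h Hc Ho. apply (goodE_g _ (Hinv _ _ Hc) Ho).
  - intros f [Hf0 Hf] N.
    assert (Hfi : forall n, InvE (f n)).
    { induction n as [|n IH]; [rewrite Hf0; exact H0|].
      destruct (Hf n) as [[Ho Hm]|[Ho E]].
      - eapply invE_spoiler; eauto.
      - rewrite E. apply (goodE_g _ IH Ho). }
    apply NNPP. intros Hno.
    assert (Hun : forall n, N <= n -> e_rew (f n) <> true).
    { intros n Hn Hc. apply Hno. exists n. auto. }
    assert (Htail : forall n i, N <= i -> forall u v a u' m r,
               f i = EConf Duplicator u v (Some (a, u')) m r -> ansN R u a u' n v -> False).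
    { intros n. induction n as [n IH] using lt_wf_ind.
      intros i Hi u v a u' m r E Hn.
      assert (Ho : e_own (f i) = Duplicator) by (rewrite E; reflexivity).
      destruct (Hf i) as [[Ho' _]|[_ E1]]; [simpl in Ho'; congruence|].
      pose proof (goodE_g _ (Hfi i) Ho) as [_ [_ G]].
      destruct (G _ _ _ _ _ _ E) as [n0 [Hn0 [Hmin [H0' HS]]]].
      assert (n0 <= n) by (destruct (Nat.le_gt_cases n0 n); [auto|exfalso; eapply Hmin; eauto]).
      destruct n0 as [|k].
      - apply (Hun (Datatypes.S i)); [lia|]. rewrite E1. apply H0'. reflexivity.
      - destruct (HS k eq_refl) as [v' [E2 Hk]].
        unfold sigmaE in E1. simpl in E1. rewrite E2 in E1.
        destruct (Hf (Datatypes.S i)) as [[Ho2 Hm2]|[Ho2 _]]; [|rewrite E1 in Ho2; discriminate].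
        rewrite E1 in Hm2.
        inversion Hm2; subst.
        + match goal with H : _ = f _ |- _ =>
            apply (IH k ltac:(lia) (Datatypes.S (Datatypes.S i)) ltac:(lia) u v' _ _ _ false (eq_sym H) Hk) end.
        + match goal with H : _ = f _ |- _ =>
            apply (Hun (Datatypes.S (Datatypes.S i))); [lia|]; rewrite <- H; reflexivity end.
        + match goal with H : _ = f _ |- _ =>
            apply (Hun (Datatypes.S (Datatypes.S i))); [lia|]; rewrite <- H; reflexivity end. }
    assert (HD : exists i, N <= i /\ e_own (f i) = Duplicator).
    { destruct (Hf N) as [[Ho Hm]|[Ho _]]; [|eauto].
      exists (Datatypes.S N). split; [lia|]. simpl in Hm. destruct Hm; try discriminate; reflexivity. }
    destruct HD as [i [Hi Ho]].
    pose proof (Hfi i) as HI.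
    destruct (f i) as [o u v c m r] eqn:E; simpl in Ho, HI; subst o.
    destruct HI as [a [u' [Ec [_ [_ Hans]]]]]. subst c.
    destruct (ans_ansN _ _ _ _ _ Hans) as [n Hn].
    eapply Htail; eauto.
Qed.
End ECons.
Section BExt.
Variables s t : S.
Variable sigma : dstrategy (branching_game tau trans).
Let c0 : bconf S A := BConf Spoiler s t None false.
Hypothesis W : winning sigma c0.

Definition ReachB u v := exists c r h, consistent sigma c0 (BConf Spoiler u v c r) h.
Definition RB u v := ReachB u v \/ ReachB v u.

Lemma bdup_step u w a u' r h :
  consistent sigma c0 (BConf Duplicator u w (Some (a, u')) r) h ->
  ~ ans RB u a u' w ->
  exists w', sigma (BConf Duplicator u w (Some (a, u')) r) h = BConf Spoiler u w' (Some (a, u')) false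
             /\ ~ ans RB u a u' w'.
Proof.
  intros Hc Hna.
  pose proof (proj1 W _ _ Hc eq_refl) as Hm.
  pose proof (cons_duplicator Hc eq_refl) as Hc1.
  simpl in Hm.
  inversion Hm; subst;
  match goal with H : _ = sigma _ _ |- _ => rewrite <- H in Hc1; try rewrite <- H end.
  - exfalso. apply Hna. apply ans_tau; auto. left. do 3 eexists. exact Hc1.
  - exfalso. apply Hna. eapply ans_step; eauto. left. do 3 eexists. exact Hc1.
  - eexists. split; [reflexivity|]. intros Ha. apply Hna. eapply ans_silent; eauto.
    left. do 3 eexists. exact Hc1.
Qed.

Lemma bdup u v a u' r h :
  consistent sigma c0 (BConf Duplicator u v (Some (a, u')) r) h -> trans u a u' ->
  ans RB u a u' v.
Proof.
  intros Hc Htr. apply NNPP. intros Hna.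
  destruct (bdup_step _ _ _ _ _ _ Hc Hna) as [w' [E Hna']].
  pose proof (cons_duplicator Hc eq_refl) as Hc1. simpl in Hc1. rewrite E in Hc1.
  pose (Q := fun (c : conf (branching_game tau trans)) h =>
     consistent sigma c0 c h /\ exists w, ~ ans RB u a u' w /\
       (c = BConf Spoiler u w (Some (a, u')) false \/ c = BConf Duplicator u w (Some (a, u')) false)).
  refine (trap _ _ _ W Q ?[a1] ?[a2] ?[a3] (BConf Spoiler u w' (Some (a, u')) false) (BConf Duplicator u v (Some (a, u')) r :: h) ?[a4]).
  - intros c h' [H _]; exact H.
  - intros c h' [_ [w [_ [-> | ->]]]]; simpl; discriminate.
  - intros c h' [Hc' [w [Hw [-> | ->]]]].
    + exists (BConf Duplicator u w (Some (a, u')) false). split; [|eauto].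
      apply cons_spoiler; [exact Hc'|reflexivity|]. simpl. apply bS1_same; auto.
    + destruct (bdup_step _ _ _ _ _ _ Hc' Hw) as [w2 [E2 Hw2]].
      exists (BConf Spoiler u w2 (Some (a, u')) false). split; [|eauto].
      rewrite <- E2. apply cons_duplicator; auto.
  - split; [exact Hc1|]. eauto.
Qed.

Lemma bext : bisim RB /\ RB s t.
Proof.
  split.
  - intros u v Huv. split; [destruct Huv; [right|left]; auto|].
    intros a u' Htr. destruct Huv as [[c [r [h Hc]]]|[c [r [h Hc]]]].
    + destruct (classic (c = Some (a, u') \/ c = None)) as [Hcc|Hcc].
      * eapply bdup; [|exact Htr]. eapply cons_spoiler; [exact Hc|reflexivity|]. apply bS1_same; auto.
      * eapply bdup; [|exact Htr]. eapply cons_spoiler; [exact Hc|reflexivity|]. apply bS1_other; auto.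
    + eapply bdup; [|exact Htr]. eapply cons_spoiler; [exact Hc|reflexivity|]. apply bS2; auto.
  - left. exists None, false, []. apply cons_init.
Qed.
End BExt.
Section EExt.
Variables s t : S.
Variable sigma : dstrategy (empty_generic_game tau trans).
Let c0 : econf S A := EConf Spoiler s t None None false.
Hypothesis W : winning sigma c0.

Definition ReachE u v := exists c m r h, consistent sigma c0 (EConf Spoiler u v c m r) h.
Definition RE u v := ReachE u v \/ ReachE v u.

Definition InvX (c : econf S A) : Prop :=
  (e_own c = Duplicator -> e_c c <> None) /\
  forall a x, e_c c = Some (a, x) ->
    e_m c = Some (e_r c, frown) \/ (e_m c = Some (e_r c, smile) /\ x = e_l c).

Lemma invX c h : consistent sigma c0 c h -> InvX c.
Proof.
  induction 1 as [|c h c' Hc IH Ho Hm|c h Hc IH Ho].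
  - split; simpl; [discriminate|intros; discriminate].
  - simpl in Hm. destruct Hm; simpl in *; try discriminate;
      (split; [intros Hx0 Hx1; first [discriminate | contradiction]|]); intros a0 x E; try discriminate;
      try (injection E; intros; subst); auto.
    simpl. apply (proj2 IH a0 x); auto.
  - pose proof (proj1 W _ _ Hc Ho) as Hm. simpl in Hm.
    destruct Hm; simpl in *;
      (split; [intros Hx0 Hx1; first [discriminate | contradiction]|]); intros a0 x E; try discriminate;
      try (injection E; intros; subst); auto.
    destruct (proj2 IH a0 x eq_refl) as [E1|[E1 E2]]; injection E1; intros; subst; auto.
Qed.

Lemma efrown_step u w a u' r h :
  consistent sigma c0 (EConf Duplicator u w (Some (a, u')) (Some (w, frown)) r) h ->
  ~ ans RE u a u' w ->
  exists w', sigma (EConf Duplicator u w (Some (a, u')) (Some (w, frown)) r) h =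
             EConf Spoiler u w' (Some (a, u')) (Some (w', frown)) false
             /\ ~ ans RE u a u' w'.
Proof.
  intros Hc Hna.
  pose proof (proj1 W _ _ Hc eq_refl) as Hm.
  pose proof (cons_duplicator Hc eq_refl) as Hc1.
  simpl in Hm.
  inversion Hm; subst;
  match goal with H : _ = sigma _ _ |- _ => rewrite <- H in Hc1; try rewrite <- H end.
  - exfalso. apply Hna. apply ans_tau; auto. left. do 4 eexists. exact Hc1.
  - exfalso. apply Hna. eapply ans_step; eauto. left. do 4 eexists. exact Hc1.
  - exfalso. apply Hna. eapply ans_step; eauto. left. do 4 eexists. exact Hc1.
  - eexists. split; [reflexivity|]. intros Ha. apply Hna. eapply ans_silent; eauto.
    left. do 4 eexists. exact Hc1.
Qed.

Lemma efrown u v a u' r h :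
  consistent sigma c0 (EConf Duplicator u v (Some (a, u')) (Some (v, frown)) r) h ->
  ans RE u a u' v.
Proof.
  intros Hc. apply NNPP. intros Hna.
  destruct (efrown_step _ _ _ _ _ _ Hc Hna) as [w' [E Hna']].
  pose proof (cons_duplicator Hc eq_refl) as Hc1. simpl in Hc1. rewrite E in Hc1.
  pose (Q := fun (c : conf (empty_generic_game tau trans)) h =>
     consistent sigma c0 c h /\ exists w, ~ ans RE u a u' w /\
       (c = EConf Spoiler u w (Some (a, u')) (Some (w, frown)) false \/
        c = EConf Duplicator u w (Some (a, u')) (Some (w, frown)) false)).
  refine (trap _ _ _ W Q ?[a1] ?[a2] ?[a3] _ _ ?[a4]).
  - intros c h' [H _]; exact H.
  - intros c h' [_ [w [_ [-> | ->]]]]; simpl; discriminate.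
  - intros c h' [Hc' [w [Hw [-> | ->]]]].
    + exists (EConf Duplicator u w (Some (a, u')) (Some (w, frown)) false). split; [|eauto].
      apply cons_spoiler; [exact Hc'|reflexivity|]. simpl. apply eS1; discriminate.
    + destruct (efrown_step _ _ _ _ _ _ Hc' Hw) as [w2 [E2 Hw2]].
      exists (EConf Spoiler u w2 (Some (a, u')) (Some (w2, frown)) false). split; [|eauto].
      rewrite <- E2. apply cons_duplicator; auto.
  - split; [exact Hc1|]. eauto.
Qed.

Lemma esmile_step x w a r h :
  trans x a x ->
  consistent sigma c0 (EConf Duplicator x w (Some (a, x)) (Some (w, smile)) r) h ->
  ~ ans RE x a x w ->
  exists w', sigma (EConf Duplicator x w (Some (a, x)) (Some (w, smile)) r) h =
             EConf Spoiler x w' (Some (a, x)) (Some (w', smile)) false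
             /\ ~ ans RE x a x w'.
Proof.
  intros Htr Hc Hna.
  pose proof (proj1 W _ _ Hc eq_refl) as Hm.
  pose proof (cons_duplicator Hc eq_refl) as Hc1.
  simpl in Hm.
  inversion Hm; subst;
  match goal with H : _ = sigma _ _ |- _ => rewrite <- H in Hc1; try rewrite <- H end.
  - exfalso. apply Hna. apply ans_tau; auto. left. do 4 eexists. exact Hc1.
  - eexists. split; [reflexivity|]. intros Ha. apply Hna. eapply ans_silent; eauto.
    left. do 4 eexists. exact Hc1.
  - exfalso. apply Hna. eapply ans_silent; eauto.
    + left. do 4 eexists. exact Hc1.
    + eapply efrown. eapply cons_spoiler; [exact Hc1|reflexivity|]. simpl. apply eS2a. exact Htr.
Qed.

Lemma esmile x v a r h :
  trans x a x ->
  consistent sigma c0 (EConf Duplicator x v (Some (a, x)) (Some (v, smile)) r) h ->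
  ans RE x a x v.
Proof.
  intros Htr Hc. apply NNPP. intros Hna.
  destruct (esmile_step _ _ _ _ _ Htr Hc Hna) as [w' [E Hna']].
  pose proof (cons_duplicator Hc eq_refl) as Hc1. simpl in Hc1. rewrite E in Hc1.
  pose (Q := fun (c : conf (empty_generic_game tau trans)) h =>
     consistent sigma c0 c h /\ exists w, ~ ans RE x a x w /\
       (c = EConf Spoiler x w (Some (a, x)) (Some (w, smile)) false \/
        c = EConf Duplicator x w (Some (a, x)) (Some (w, smile)) false)).
  refine (trap _ _ _ W Q ?[a1] ?[a2] ?[a3] _ _ ?[a4]).
  - intros c h' [H _]; exact H.
  - intros c h' [_ [w [_ [-> | ->]]]]; simpl; discriminate.
  - intros c h' [Hc' [w [Hw [-> | ->]]]].
    + exists (EConf Duplicator x w (Some (a, x)) (Some (w, smile)) false). split; [|eauto].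
      apply cons_spoiler; [exact Hc'|reflexivity|]. simpl. apply eS1; discriminate.
    + destruct (esmile_step _ _ _ _ _ Htr Hc' Hw) as [w2 [E2 Hw2]].
      exists (EConf Spoiler x w2 (Some (a, x)) (Some (w2, smile)) false). split; [|eauto].
      rewrite <- E2. apply cons_duplicator; auto.
  - split; [exact Hc1|]. eauto.
Qed.

Lemma eext : bisim RE /\ RE s t.
Proof.
  split.
  - intros u v Huv. split; [destruct Huv; [right|left]; auto|].
    intros a u' Htr. destruct Huv as [[c [m [r [h Hc]]]]|[c [m [r [h Hc]]]]].
    + destruct c as [p|].
      * destruct (classic (p = (a, u'))) as [->|Hne].
        -- assert (Hc2 : consistent sigma c0 (EConf Duplicator u v (Some (a, u')) m false)
                  (EConf Spoiler u v (Some (a, u')) m r :: h))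
             by (apply cons_spoiler; [exact Hc|reflexivity|simpl; apply eS1; discriminate]).
           destruct (proj2 (invX _ _ Hc2) a u' eq_refl) as [Em|[Em Ex]]; simpl in *; subst m.
           ++ eapply efrown; exact Hc2.
           ++ subst u'. eapply esmile; eauto.
        -- eapply efrown. eapply cons_spoiler; [exact Hc|reflexivity|]. simpl. apply eS2b; auto.
           intros E; apply Hne; injection E; intros; subst; auto.
      * eapply efrown. eapply cons_spoiler; [exact Hc|reflexivity|]. simpl. apply eS2a; auto.
    + eapply efrown. eapply cons_spoiler; [exact Hc|reflexivity|]. simpl. apply eS3; auto.
  - left. exists None, None, false, []. apply cons_init.
Qed.
End EExt.
End LTS.

Theorem theorem5p14 (S A : Type) (tau : A) (trans : S -> A -> S -> Prop)
  (s t : S) :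
  branching_bisimilar tau trans s t <-> empty_generic_bisimilar tau trans s t.
Proof.
  split.
  - intros [sigma W]. destruct (bext S A tau trans s t sigma W) as [HB Hst].
    exact (econs S A tau trans _ HB s t Hst).
  - intros [sigma W]. destruct (eext S A tau trans s t sigma W) as [HB Hst].
    exact (bcons S A tau trans _ HB s t Hst).
Qed.
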